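(* Under the setting of the context (with $\boldsymbol{Z}_a=[\boldsymbol{Z}_r\ \boldsymbol{Z}_u]$ of full column rank and arbitrary $\boldsymbol{w}_{\mathrm{init}}\in\mathbb{R}^D$, $\boldsymbol{y}_r\in\mathbb{R}^{N_r}$, $\boldsymbol{y}_u\in\mathbb{R}^{N_u}$), if the forgetting labels are set to $$\tilde{\boldsymbol{y}}_u=\boldsymbol{Z}_u^\top\big(\boldsymbol{\Pi}_r(\boldsymbol{w}_p-\boldsymbol{w}_{\mathrm{init}})+\boldsymbol{w}_{\mathrm{init}}\big),$$ then $\boldsymbol{w}_u=\boldsymbol{w}_r$.
   Context: Setting (over-parameterized linear model trained to interpolation / minimum-distance solutions). Given $\boldsymbol{Z}_r\in\mathbb{R}^{D\times N_r}$ (features of remaining data), $\boldsymbol{Z}_u\in\mathbb{R}^{D\times N_u}$ (features of forgetting data), with $\boldsymbol{Z}_a=[\boldsymbol{Z}_r\ \boldsymbol{Z}_u]$ of full column rank. Write $\boldsymbol{y}_a=[\boldsymbol{y}_r;\boldsymbol{y}_u]\in\mathbb{R}^{N_r+N_u}$ (original labels) and $\tilde{\boldsymbol{y}}_a=[\boldsymbol{y}_r;\tilde{\boldsymbol{y}}_u]$ (labels with the forgetting part replaced by $\tilde{\boldsymbol{y}}_u$). Define $\boldsymbol{w}_p=\boldsymbol{w}_{\mathrm{init}}+\boldsymbol{Z}_a(\boldsymbol{Z}_a^\top\boldsymbol{Z}_a)^{-1}(\boldsymbol{y}_a-\boldsymbol{Z}_a^\top\boldsymbol{w}_{\mathrm{init}})$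 (pre-trained model), $\boldsymbol{w}_u=\boldsymbol{w}_p+\boldsymbol{Z}_a(\boldsymbol{Z}_a^\top\boldsymbol{Z}_a)^{-1}(\tilde{\boldsymbol{y}}_a-\boldsymbol{Z}_a^\top\boldsymbol{w}_p)$ (unlearned model), $\boldsymbol{w}_r=\boldsymbol{w}_{\mathrm{init}}+\boldsymbol{Z}_r(\boldsymbol{Z}_r^\top\boldsymbol{Z}_r)^{-1}(\boldsymbol{y}_r-\boldsymbol{Z}_r^\top\boldsymbol{w}_{\mathrm{init}})$ (retrained model). Let $\boldsymbol{\Pi}_r=\boldsymbol{Z}_r(\boldsymbol{Z}_r^\top\boldsymbol{Z}_r)^{-1}\boldsymbol{Z}_r^\top$. *)

(* Defs.v *)
From HB Require Import structures.
From mathcomp Require Import all_boot all_order all_algebra.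
Set Implicit Arguments. Unset Strict Implicit. Unset Printing Implicit Defensive.
Import Order.TTheory GRing.Theory Num.Theory.
Local Open Scope ring_scope.

Definition min_dist_update (R : realFieldType) (D N : nat)
  (Z : 'M[R]_(D, N)) (w0 : 'cV[R]_D) (y : 'cV[R]_N) : 'cV[R]_D :=
  w0 + Z *m invmx (Z^T *m Z) *m (y - Z^T *m w0).

Definition Za (R : realFieldType) (D Nr Nu : nat)
  (Zr : 'M[R]_(D, Nr)) (Zu : 'M[R]_(D, Nu)) : 'M[R]_(D, Nr + Nu) :=
  row_mx Zr Zu.

Definition w_p (R : realFieldType) (D Nr Nu : nat)
  (Zr : 'M[R]_(D, Nr)) (Zu : 'M[R]_(D, Nu)) (winit : 'cV[R]_D)
  (yr : 'cV[R]_Nr) (yu : 'cV[R]_Nu) : 'cV[R]_D :=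
  min_dist_update (Za Zr Zu) winit (col_mx yr yu).

Definition w_u (R : realFieldType) (D Nr Nu : nat)
  (Zr : 'M[R]_(D, Nr)) (Zu : 'M[R]_(D, Nu)) (winit : 'cV[R]_D)
  (yr : 'cV[R]_Nr) (yu yu' : 'cV[R]_Nu) : 'cV[R]_D :=
  min_dist_update (Za Zr Zu) (w_p Zr Zu winit yr yu) (col_mx yr yu').

Definition w_r (R : realFieldType) (D Nr : nat)
  (Zr : 'M[R]_(D, Nr)) (winit : 'cV[R]_D) (yr : 'cV[R]_Nr) : 'cV[R]_D :=
  min_dist_update Zr winit yr.

Definition Pi_r (R : realFieldType) (D Nr : nat) (Zr : 'M[R]_(D, Nr))
  : 'M[R]_D :=
  Zr *m invmx (Zr^T *m Zr) *m Zr^T.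

(* Main.v *)
Require Import Defs.
From HB Require Import structures.
From mathcomp Require Import all_boot all_order all_algebra.
Import Order.TTheory GRing.Theory Num.Theory.
Local Open Scope ring_scope.

Lemma gram_unit (R : realFieldType) (D n : nat) (A : 'M[R]_(D, n)) :
  (forall x : 'cV[R]_n, A *m x = 0 -> x = 0) -> A^T *m A \in unitmx.
Proof.
move=> H; rewrite -row_free_unit /row_free.
set G := A^T *m A.
have K0 : kermx G = 0.
  apply/row_matrixP => i; rewrite row0.
  set u := row i (kermx G).
  have uG : u *m G = 0 by rewrite /u -row_mul mulmx_ker row0.
  have v0 : A *m u^T = 0.
    set v := A *m u^T.
    have : v^T *m v = 0.
      by rewrite /v trmx_mul trmxK mulmxA -(mulmxA u) uG mul0mx.
    move=> /matrixP /(_ 0 0); rewrite !mxE => S.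
    have P := @psumr_eq0P R _ (fun _ => true) (fun j => v j 0 * v j 0).
    have {}P := P (fun j _ => ltac:(by rewrite -expr2 sqr_ge0)).
    have {P} P : forall j, v j 0 * v j 0 = 0.
      move=> j; apply: P => //; apply: etrans S; apply: eq_bigr => j' _.
      by rewrite [v^T _ _]mxE.
    apply/matrixP => j k; rewrite (ord1 k).
    by move/eqP: (P j); rewrite mulf_eq0 orbb => /eqP ->; rewrite mxE.
  by rewrite -(trmxK u) (H _ v0) trmx0.
have := mxrank_ker G; rewrite K0 mxrank0 => /esym/eqP; rewrite subn_eq0 => h.
by apply/eqP/anti_leq; rewrite h rank_leq_row.
Qed.

Arguments gram_unit {R D n A}.

Theorem corollary1 (R : realFieldType) (D Nr Nu : nat)
  (Zr : 'M[R]_(D, Nr)) (Zu : 'M[R]_(D, Nu))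
  (winit : 'cV[R]_D) (yr : 'cV[R]_Nr) (yu : 'cV[R]_Nu) :
  \rank (Za Zr Zu) = (Nr + Nu)%N ->
  let wp := w_p Zr Zu winit yr yu in
  let yu' := Zu^T *m (Pi_r Zr *m (wp - winit) + winit) in
  w_u Zr Zu winit yr yu yu' = w_r Zr winit yr.
Proof.
move=> rk wp yu'.
set A := Za Zr Zu.
have HA : forall x : 'cV[R]_(Nr + Nu), A *m x = 0 -> x = 0.
  move=> x Ax; apply/eqP; rewrite -trmx_eq0 -(mulmx_free_eq0 _ (B := A^T)).
    by rewrite -trmx_mul Ax trmx0.
  by rewrite /row_free mxrank_tr rk.
have GU := gram_unit HA.
have GrU : Zr^T *m Zr \in unitmx.
  apply: gram_unit => x Zx; have := HA (col_mx x 0).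
  rewrite /A /Za mul_row_col Zx mulmx0 addr0 => /(_ erefl) /eqP.
  by rewrite col_mx_eq0 => /andP [/eqP -> _].
have ATwp : A^T *m wp = col_mx yr yu.
  rewrite /wp /w_p /min_dist_update -/A mulmxDr !mulmxA mulmxV // mul1mx.
  by rewrite addrC subrK.
have Zrwp : Zr^T *m wp = yr.
  by move: ATwp; rewrite /A /Za tr_row_mx mul_col_mx => /eq_col_mx [].
set wr := Pi_r Zr *m (wp - winit) + winit.
have wrE : w_r Zr winit yr = wr.
  by rewrite /w_r /min_dist_update /wr /Pi_r addrC -!mulmxA [Zr^T *m (_ - _)]mulmxBr Zrwp.
have ATwr : A^T *m wr = col_mx yr yu'.
  rewrite /A /Za tr_row_mx mul_col_mx; congr col_mx.
  rewrite -wrE /w_r /min_dist_update mulmxDr !mulmxA mulmxV // mul1mx.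
  by rewrite addrC subrK.
rewrite wrE /w_u /min_dist_update -/A -/wp -ATwr -mulmxBr.
set d := invmx (A^T *m A) *m (col_mx yr yu - A^T *m winit).
have wpE : wp = winit + A *m d by rewrite /wp /w_p /min_dist_update -/A /d mulmxA.
set e : 'cV[R]_(Nr + Nu) := col_mx (invmx (Zr^T *m Zr) *m (Zr^T *m (A *m d))) 0.
have AE : A *m e = Pi_r Zr *m (wp - winit).
  rewrite /e /A /Za mul_row_col mulmx0 addr0 wpE addrC addKr /Pi_r !mulmxA.
  by [].
have Hd : A *m d = wp - winit by rewrite wpE addrC addKr.
have Hwd : wr - wp = A *m (e - d).
  by rewrite mulmxBr AE /wr Hd opprB addrA.
rewrite Hwd (mulmxA A^T) mulmxA -(mulmxA A) mulVmx // mulmx1.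
by rewrite -Hwd addrC subrK.
Qed.
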